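(* For all terms $q,q'$ the following are equivalent: (1) $q=_{\mathrm{CLC}_0}q'$; (2) $q=_{\mathrm{CLC}}q'$; (3) $q=_{\mathrm{CLC}^+}q'$.
   Context: Terms are built from variables and the constants $C,T,F,K,S$ by binary application (left-associative). $\mathrm{CLC}_0$ is the (unconditional) term rewriting system with rules $C\,T\,x\,y\to x$; $C\,F\,x\,y\to y$; $C\,z\,x\,x\to x$; $K\,x\,y\to x$; $S\,x\,y\,z\to x\,z\,(y\,z)$. $\mathrm{CLC}$ is the conditional system with rules $C\,T\,x\,y\to x$; $C\,F\,x\,y\to y$; $C\,z\,x\,y\to x \Leftarrow x=y$; $K\,x\,y\to x$; $S\,x\,y\,z\to x\,z\,(y\,z)$, where $=$ is convertibility in the system itself, defined by levels: $R_0$ interprets the condition as the empty relation, $R_{n+1}$ interprets $=$ as the conversion relation of $\to_{R_n}$, and $\to_{\mathrm{CLC}}=\bigcup_n\to_{R_n}$. $\mathrm{CLC}^+$ is defined in the same way from the rules of $\mathrm{CLC}$ plus $C\,z\,x\,y\to y\Leftarrow x=y$. For a system $R$, $=_R$ denotes the conversion relation (reflexive–symmetric–transitive closure of one-step rewriting closed under contexts). *)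

(* Defs.v *)
From Stdlib Require Import Relations.

Inductive term : Type :=
| Var : nat -> term
| Cc : term
| Tc : term
| Fc : term
| Kc : term
| Sc : term
| App : term -> term -> term.

Definition app2 (a b c : term) : term := App (App a b) c.
Definition app3 (a b c d : term) : term := App (App (App a b) c) d.

Inductive step0 : term -> term -> Prop :=
| s0_CT x y : step0 (app3 Cc Tc x y) x
| s0_CF x y : step0 (app3 Cc Fc x y) y
| s0_Cxx z x : step0 (app3 Cc z x x) x
| s0_K x y : step0 (app2 Kc x y) x
| s0_S x y z : step0 (app3 Sc x y z) (App (App x z) (App y z))
| s0_appl t t' u : step0 t t' -> step0 (App t u) (App t' u)
| s0_appr t u u' : step0 u u' -> step0 (App t u) (App t u').

(* One-step rewriting for CLC (plus = false) or CLC^+ (plus = true),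
   where the condition "x = y" is interpreted by the relation E. *)
Inductive cstep (plus : bool) (E : term -> term -> Prop) : term -> term -> Prop :=
| cs_CT x y : cstep plus E (app3 Cc Tc x y) x
| cs_CF x y : cstep plus E (app3 Cc Fc x y) y
| cs_Cl z x y : E x y -> cstep plus E (app3 Cc z x y) x
| cs_Cr z x y : plus = true -> E x y -> cstep plus E (app3 Cc z x y) y
| cs_K x y : cstep plus E (app2 Kc x y) x
| cs_S x y z : cstep plus E (app3 Sc x y z) (App (App x z) (App y z))
| cs_appl t t' u : cstep plus E t t' -> cstep plus E (App t u) (App t' u)
| cs_appr t u u' : cstep plus E u u' -> cstep plus E (App t u) (App t u').

Definition conv (R : term -> term -> Prop) : term -> term -> Prop :=
  clos_refl_sym_trans term R.

Fixpoint level (plus : bool) (n : nat) : term -> term -> Prop :=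
  match n with
  | O => cstep plus (fun _ _ => False)
  | S m => cstep plus (conv (level plus m))
  end.

Definition cstep_union (plus : bool) (t u : term) : Prop :=
  exists n, level plus n t u.

Definition conv_CLC0 : term -> term -> Prop := conv step0.
Definition conv_CLC : term -> term -> Prop := conv (cstep_union false).
Definition conv_CLCplus : term -> term -> Prop := conv (cstep_union true).

(* Main.v *)
Require Import Defs.
From Stdlib Require Import Relations.

Lemma conv_mono (R R' : term -> term -> Prop) :
  (forall a b, R a b -> R' a b) -> forall a b, conv R a b -> conv R' a b.
Proof.
  intros H a b c; induction c.
  - apply rst_step; auto.
  - apply rst_refl.
  - apply rst_sym; auto.
  - eapply rst_trans; eauto.
Qed.

Lemma conv0_appl t t' u : conv_CLC0 t t' -> conv_CLC0 (App t u) (App t' u).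
Proof.
  intro c; induction c.
  - apply rst_step; constructor; auto.
  - apply rst_refl.
  - apply rst_sym; auto.
  - eapply rst_trans; eauto.
Qed.

Lemma conv0_appr t u u' : conv_CLC0 u u' -> conv_CLC0 (App t u) (App t u').
Proof.
  intro c; induction c.
  - apply rst_step; apply s0_appr; auto.
  - apply rst_refl.
  - apply rst_sym; auto.
  - eapply rst_trans; eauto.
Qed.

Lemma L1 plus t u : step0 t u -> level plus 1 t u.
Proof.
  simpl; intro H; induction H.
  - apply cs_CT.
  - apply cs_CF.
  - apply cs_Cl. apply rst_refl.
  - apply cs_K.
  - apply cs_S.
  - apply cs_appl; auto.
  - apply cs_appr; auto.
Qed.

Lemma L2a plus (E : term -> term -> Prop) :
  (forall a b, E a b -> conv_CLC0 a b) ->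
  forall t u, cstep plus E t u -> conv_CLC0 t u.
Proof.
  intros HE t u H; induction H.
  - apply rst_step, s0_CT.
  - apply rst_step, s0_CF.
  - apply rst_trans with (app3 Cc z x x).
    + unfold app3. apply conv0_appr. apply rst_sym. apply HE; auto.
    + apply rst_step, s0_Cxx.
  - apply rst_trans with (app3 Cc z y y).
    + unfold app3. apply conv0_appl, conv0_appr. apply HE; auto.
    + apply rst_step, s0_Cxx.
  - apply rst_step, s0_K.
  - apply rst_step, s0_S.
  - apply conv0_appl; auto.
  - apply conv0_appr; auto.
Qed.

Lemma L2 plus n : forall t u, level plus n t u -> conv_CLC0 t u.
Proof.
  induction n; simpl; intros t u H.
  - eapply L2a; [|exact H]. intros a b [].
  - eapply L2a; [|exact H]. intros a b c.
    induction c.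
    + apply IHn; auto.
    + apply rst_refl.
    + apply rst_sym; auto.
    + eapply rst_trans; eauto.
Qed.

Lemma toU plus q q' : conv_CLC0 q q' -> conv (cstep_union plus) q q'.
Proof.
  apply conv_mono. intros a b H. exists 1. apply L1; auto.
Qed.

Lemma fromU plus q q' : conv (cstep_union plus) q q' -> conv_CLC0 q q'.
Proof.
  intro c; induction c.
  - destruct H as [n H]. eapply L2; eauto.
  - apply rst_refl.
  - apply rst_sym; auto.
  - eapply rst_trans; eauto.
Qed.

Theorem mainTheorem2 : forall q q' : term,
  (conv_CLC0 q q' <-> conv_CLC q q') /\ (conv_CLC q q' <-> conv_CLCplus q q').
Proof.
  intros q q'; unfold conv_CLC, conv_CLCplus; split; split; intro H.
  - apply toU; auto.
  - eapply fromU; eauto.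
  - apply toU; eapply fromU; eauto.
  - apply toU; eapply fromU; eauto.
Qed.
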